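(* For all $R\in\mathcal{M}$, $$\sum_{\substack{H,S,T\in\mathcal{M},\ HST\in\mathcal{S}_{\mathcal{M}}(X)\\ (S,T)=1,\ (HST,R)=1\\ \deg HS,\ \deg HT\le\frac{1}{10}\deg R}}\frac{\alpha_{-1}(HS)\alpha_{-1}(HT)}{|HST|}\deg ST \ll X^4$$ as $X\to\infty$.
   Context: $q$ prime power, $\mathcal{M}$ the monic polynomials of $\mathbb{F}_q[T]$, $P$ denotes a monic irreducible, $|A|=q^{\deg A}$, $X$ a positive integer, $\mathcal{S}_{\mathcal{M}}(X)=\{A\in\mathcal{M}: P\mid A\Rightarrow\deg P\le X\}$. The function $\alpha_{-1}$ is multiplicative with: $\alpha_{-1}(P)=-1$ if $\deg P\le X$ and $0$ if $\deg P>X$; $\alpha_{-1}(P^2)=\frac12$ if $\frac X2<\deg P\le X$ and $0$ otherwise; $\alpha_{-1}(P^3)=-\frac12$ if $\frac X2<\deg P\le X$ and $0$ otherwise; $\alpha_{-1}(P^m)=0$ for $m\ge4$. *)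

(* Defs.v *)
From HB Require Import structures.
From mathcomp Require Import all_boot all_order all_algebra all_field.
From mathcomp Require Import boolp.
Set Implicit Arguments. Unset Strict Implicit. Unset Printing Implicit Defensive.
Import Order.TTheory GRing.Theory Num.Theory.
Local Open Scope ring_scope.

Section Defs.
Variable F : finFieldType.
Variable R : realFieldType.

Definition pdeg (A : {poly F}) : nat := (size A).-1.

Definition pnorm (A : {poly F}) : R := (#|F|%:R) ^+ pdeg A.

Definition monic_le (d : nat) : seq {poly F} :=
  undup [seq p <- [seq Poly (tval t) | t : (d.+1).-tuple F]
           | (p \is monic) && (size p <= d.+1)%N].

Definition mirred (P : {poly F}) : bool :=
  (P \is monic) && `[< irreducible_poly P >].

Definition pmult (P A : {poly F}) : nat :=
  \max_(m < size A | P ^+ m %| A) (m : nat).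

Definition smooth (X : nat) (A : {poly F}) : bool :=
  all (fun P => (P %| A) ==> (pdeg P <= X)%N)
      [seq P <- monic_le (pdeg A) | mirred P].

Definition alpha_loc (X : nat) (P : {poly F}) (m : nat) : R :=
  match m with
  | 0 => 1
  | 1 => if (pdeg P <= X)%N then -1 else 0
  | 2 => if (X < 2 * pdeg P)%N && (pdeg P <= X)%N then 2^-1 else 0
  | 3 => if (X < 2 * pdeg P)%N && (pdeg P <= X)%N then - 2^-1 else 0
  | _ => 0
  end.

Definition alpha (X : nat) (A : {poly F}) : R :=
  \prod_(P <- monic_le (pdeg A) | mirred P && (P %| A)) alpha_loc X P (pmult P A).

Definition lemma_sum (X : nat) (Rp : {poly F}) : R :=
  let D := pdeg Rp in
  \sum_(H <- monic_le D) \sum_(S <- monic_le D) \sum_(T <- monic_le D |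
      [&& smooth X (H * S * T), coprimep S T, coprimep (H * S * T) Rp,
          (10 * pdeg (H * S) <= D)%N & (10 * pdeg (H * T) <= D)%N])
    alpha X (H * S) * alpha X (H * T) / pnorm (H * S * T) * (pdeg (S * T))%:R.

End Defs.

(* Main.v *)
Require Import Defs.
From HB Require Import structures.
From mathcomp Require Import all_boot all_order all_algebra all_field.
From mathcomp Require Import boolp zify.
From mathcomp.algebra_tactics Require Import ring lra.
Set Implicit Arguments. Unset Strict Implicit. Unset Printing Implicit Defensive.
Import Order.TTheory GRing.Theory Num.Theory.
Local Open Scope ring_scope.

Section Basics.
Variable F : finFieldType.

Lemma q_gt1 : (1 < #|F|)%N.
Proof. exact: card_finNzRing_gt1. Qed.

Lemma mem_monic_le d (P : {poly F}) :
  (P \in monic_le F d) = (P \is monic) && (size P <= d.+1)%N.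
Proof.
rewrite /monic_le mem_undup mem_filter.
apply/idP/idP => [/andP[]//|H]; rewrite H /=; case/andP: H => Pm Ps.
apply/mapP; exists [tuple P`_i | i < d.+1]; first by rewrite mem_enum.
apply/polyP => i; rewrite coef_Poly /=.
have [lt|ge] := ltnP i d.+1.
  by rewrite (nth_map ord0) ?size_enum_ord // -[i]/(nat_of_ord (Ordinal lt)) nth_ord_enum.
rewrite !seq.nth_default // ?(leq_trans Ps) //.
by rewrite size_map size_enum_ord.
Qed.

Lemma uniq_monic_le d : uniq (monic_le F d).
Proof. exact: undup_uniq. Qed.

Lemma mirredP (P : {poly F}) : mirred P ->
  [/\ P \is monic, irreducible_poly P & (1 < size P)%N].
Proof.
by case/andP => Pm /asboolP Pi; split => //; case: Pi.
Qed.

Lemma monic_neq0' (P : {poly F}) : P \is monic -> P != 0.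
Proof. exact: monic_neq0. Qed.

Lemma pdeg_monicM (p r : {poly F}) : p \is monic -> r \is monic ->
  pdeg (p * r) = (pdeg p + pdeg r)%N.
Proof.
move=> pm rm; rewrite /pdeg size_monicM ?monic_neq0 //.
have: (0 < size p)%N by rewrite size_poly_gt0 monic_neq0.
have: (0 < size r)%N by rewrite size_poly_gt0 monic_neq0.
by case: (size r) => // b _; case: (size p) => // a _; rewrite addSn addnS.
Qed.

Lemma pdeg_prod (I : Type) (r : seq I) (P : pred I) (G : I -> {poly F}) :
  (forall i, P i -> G i \is monic) ->
  pdeg (\prod_(i <- r | P i) G i) = (\sum_(i <- r | P i) pdeg (G i))%N.
Proof.
move=> Gm; elim: r => [|a r IH]; first by rewrite !big_nil /pdeg size_poly1.
rewrite !big_cons; case: ifP => // Pa.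
by rewrite pdeg_monicM ?IH ?Gm // monic_prod.
Qed.

Lemma pdeg_exp (p : {poly F}) k : p \is monic -> pdeg (p ^+ k) = (k * pdeg p)%N.
Proof. by move=> pm; rewrite /pdeg size_exp mulnC. Qed.

End Basics.

Section Fact.
Variable F : finFieldType.
Implicit Types A P : {poly F}.

Lemma smoothP X A : A != 0 ->
  reflect (forall P, mirred P -> P %| A -> (pdeg P <= X)%N) (smooth X A).
Proof.
move=> A0; apply: (iffP allP) => [H P mP dP | H P].
  have: P \in [seq P <- monic_le F (pdeg A) | mirred P].
    rewrite mem_filter mP mem_monic_le; have [Pm _ _] := mirredP mP.
    rewrite Pm /= /pdeg prednK ?size_poly_gt0 //.
    exact: dvdp_leq.
  by move/H/implyP; apply.
by rewrite mem_filter => /andP[mP _]; apply/implyP; apply: H.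
Qed.

Lemma alpha_le1 (R : realFieldType) X A : `|alpha R X A| <= 1.
Proof.
rewrite /alpha normr_prod; apply: prodr_ile1 => P _.
rewrite normr_ge0 /=.
have h2 : `|(2:R)^-1| <= 1.
  by rewrite ger0_norm ?invr_ge0 ?ler0n // invf_le1 ?ltr0n // ler1n.
case: (pmult P A) => [|[|[|[|m]]]] /=; rewrite ?normr1 //.
- by case: ifP; rewrite ?normrN ?normr1 ?normr0.
- by case: ifP; rewrite ?normr0.
- by case: ifP; rewrite ?normrN ?normr0.
- by rewrite normr0.
Qed.

Lemma monic_size1 A : A \is monic -> (size A <= 1)%N -> A = 1.
Proof.
move=> Am sA; have: size A == 1%N.
  by rewrite eqn_leq sA size_poly_gt0 monic_neq0.
case/size_poly1P => c c0 Ac; move: Am; rewrite Ac monicE lead_coefC => /eqP->.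
done.
Qed.

Lemma exists_irr_div n A : (size A <= n)%N -> A \is monic -> (1 < size A)%N ->
  exists2 P, mirred P & P %| A.
Proof.
elim: n A => [|n IH] A sA Am s1; first by move: sA s1; lia.
case: (pselect (irreducible_poly A)) => [Ai | nAi].
  by exists A => //; rewrite /mirred Am; apply/asboolP.
have [r [sr dr nr]] : exists r : {poly F}, [/\ size r != 1%N, r %| A & ~~ (r %= A)].
  apply: contrapT => H; apply: nAi; split => // r sr dr.
  apply: contrapT => nr; apply: H; exists r; split => //; exact/negP.
have A0 : A != 0 := monic_neq0 Am.
have r0 : r != 0 by apply: contraTneq dr => ->; rewrite dvd0p.
have lr : (size r < size A)%N.
  by rewrite ltn_neqAle dvdp_size_eqp // nr dvdp_leq.
have lc0 : lead_coef r != 0 by rewrite lead_coef_eq0.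
pose r' := (lead_coef r)^-1 *: r.
have r'm : r' \is monic by rewrite monicE lead_coefZ mulVf.
have sr' : size r' = size r by rewrite size_scale // invr_eq0.
have [P mP dP] : exists2 P, mirred P & P %| r'.
  apply: IH => //; first by rewrite sr' -ltnS (leq_trans lr).
  rewrite sr' ltn_neqAle eq_sym sr /= size_poly_gt0 //.
exists P => //; apply: dvdp_trans dP _.
by rewrite /r' dvdpZl ?invr_eq0.
Qed.

Definition Ps X := [seq P <- monic_le F X | mirred P].

Lemma mem_Ps X P : (P \in Ps X) = mirred P && (pdeg P <= X)%N.
Proof.
rewrite mem_filter mem_monic_le; case mP: (mirred P) => //=.
have [Pm _ s1] := mirredP mP; rewrite Pm /pdeg.
by case: (size P) s1.
Qed.

Lemma uniq_Ps X : uniq (Ps X).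
Proof. exact/filter_uniq/uniq_monic_le. Qed.

Lemma factor_ex X n A : (size A <= n)%N -> A \is monic -> smooth X A ->
  exists e : 'I_(size (Ps X)) -> nat,
    A = \prod_(i < size (Ps X)) (nth 0 (Ps X) i) ^+ e i.
Proof.
elim: n A => [|n IH] A sA Am smA.
  by have := monic_neq0 Am; rewrite -size_poly_gt0; move: sA; rewrite leqn0 => /eqP->.
have A0 := monic_neq0 Am.
have [s1|s2] := leqP (size A) 1.
  by exists (fun _ => 0%N); rewrite (monic_size1 Am s1) big1.
have [P mP dP] := exists_irr_div (leqnn _) Am s2.
have [Pm _ sP] := mirredP mP.
have PX : (pdeg P <= X)%N by move/smoothP: smA => /(_ A0); apply.
have PinPs : P \in Ps X by rewrite mem_Ps mP.
pose B := A %/ P.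
have AB : A = B * P by rewrite divpK.
have Bm : B \is monic by move: Am; rewrite AB monicMr.
have B0 := monic_neq0 Bm.
have smB : smooth X B.
  apply/smoothP => // Q mQ dQ; move/smoothP: smA => /(_ A0); apply => //.
  by rewrite AB dvdp_mulr.
have sB : (size B <= n)%N.
  have := pdeg_monicM Bm Pm; rewrite -AB /pdeg => h.
  rewrite -ltnS; apply: leq_trans sA.
  move: h s2 sP; case: (size A) => // a; case: (size B) => // b.
  case: (size P) => // c /= -> _ c1; rewrite ltnS; lia.
have [e He] := IH B sB Bm smB.
have li : (index P (Ps X) < size (Ps X))%N by rewrite index_mem.
pose i0 : 'I_(size (Ps X)) := Ordinal li.
exists (fun i => e i + (i == i0))%N.
rewrite AB He.
under [RHS]eq_bigr => i _ do rewrite exprD.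
rewrite big_split /=; congr (_ * _).
rewrite (bigD1 i0) //= eqxx expr1 big1 ?mulr1 => [|j /negbTE ->]; last by rewrite expr0.
by rewrite nth_index.
Qed.
End Fact.

Section Count.
Variable F : finFieldType.
Implicit Types A P : {poly F}.

Lemma irr_dvd_XqX P :
  P \is monic -> irreducible_poly P ->
  P %| 'X^(#|F| ^ (size P).-1) - 'X.
Proof.
move=> Pm Pi.
have hI : monic_irreducible_poly P by split.
pose K := {poly %/ P with hI}.
pose x : K := in_qpoly P 'X.
have hx : x ^+ #|K| = x := expf_card x.
rewrite card_qfpoly in hx.
have h0 : in_qpoly P ('X^(#|F| ^ (size P).-1) - 'X) = 0 :> K.
  by rewrite rmorphB rmorphXn /= -/x hx subrr.
have := congr1 val h0.
rewrite /= /in_qpoly /= (mk_monicE hI) => h1.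
by rewrite /dvdp (Pdiv.IdomainMonic.modpE Pm) h1.
Qed.

Lemma prod_dvd (L : seq {poly F}) f : uniq L ->
  (forall P, P \in L -> mirred P /\ P %| f) -> \prod_(P <- L) P %| f.
Proof.
elim: L => [|P L IH] /=; first by rewrite big_nil dvd1p.
case/andP => PL uL H; rewrite big_cons.
have [mP dP] := H P (mem_head _ _).
have [Pm Pi _] := mirredP mP.
rewrite Gauss_dvdp ?dP ?IH // => [Q QL|]; first by apply: H; rewrite inE QL orbT.
rewrite big_seq; apply: (big_ind (coprimep P)) => [|a b|Q QL]; first exact: coprimep1.
  by rewrite coprimepMr => ->.
have [mQ _] : mirred Q /\ Q %| f by apply: H; rewrite inE QL orbT.
have [Qm Qi _] := mirredP mQ.
rewrite irreducible_poly_coprime //; apply/negP => PQ.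
have : P %= Q.
  apply: (Qi.2 P _ PQ).
  by case: Pi; rewrite neq_ltn orbC => ->.
by rewrite eqp_monic // => /eqP PQe; move: PL; rewrite PQe QL.
Qed.

Lemma count_deg X d : (0 < d)%N ->
  (d * count (fun P => pdeg P == d) (Ps F X) <= #|F| ^ d)%N.
Proof.
move=> d0.
pose L := [seq P <- Ps F X | pdeg P == d].
have uL : uniq L by apply/filter_uniq/uniq_Ps.
have HL P : P \in L -> mirred P /\ pdeg P = d.
  by rewrite mem_filter mem_Ps => /andP[/eqP-> /andP[]].
pose f : {poly F} := 'X^(#|F| ^ d) - 'X.
have q1 := q_gt1 F.
have qd : (1 < #|F| ^ d)%N.
  by rewrite -(exp1n d) ltn_exp2r // -lt0n.
have sf : size f = (#|F| ^ d).+1.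
  rewrite /f size_addl ?size_polyXn // size_opp size_polyX ltnS //.
have f0 : f != 0 by rewrite -size_poly_gt0 sf.
have dv : \prod_(P <- L) P %| f.
  apply: prod_dvd => // P PL; have [mP dP] := HL P PL; split => //.
  have [Pm Pi _] := mirredP mP.
  by rewrite /f -dP; apply: irr_dvd_XqX.
have := dvdp_leq f0 dv; rewrite sf.
rewrite big_seq in dv *.
have Lm : \prod_(P <- L | P \in L) P \is monic.
  by apply: monic_prod => P PL; have [/mirredP[]] := HL P PL.
have -> : size (\prod_(P <- L | P \in L) P) = (pdeg (\prod_(P <- L | P \in L) P)).+1.
  by rewrite /pdeg prednK // size_poly_gt0 monic_neq0.
rewrite pdeg_prod => [|P PL]; last by have [/mirredP[]] := HL P PL.
rewrite (eq_bigr (fun _ => d)) => [|P PL]; last by have [] := HL P PL.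
rewrite -big_seq big_const_seq iter_addn_0 count_predT /L size_filter.
by rewrite ltnS.
Qed.

End Count.

Section Real.
Variable R : realFieldType.

Lemma geom_le (x : R) N : 0 <= x < 1 -> \sum_(k < N) x ^+ k <= (1 - x)^-1.
Proof.
case/andP => x0 x1.
have h : (1 - x ^+ N) = (1 - x) * \sum_(k < N) x ^+ k.
  rewrite -{1}(expr1n R N) subrXX; congr (_ * _); apply: eq_bigr => i _.
  by rewrite expr1n mul1r.
have p : 0 < 1 - x by rewrite subr_gt0.
have -> : \sum_(k < N) x ^+ k = (1 - x)^-1 * (1 - x ^+ N).
  by rewrite h mulKf // lt0r_neq0.
rewrite ler_piMr ?invr_ge0 ?(ltW p) //; have := exprn_ge0 N x0; lra.
Qed.

Lemma wgeom_eq (x : R) N :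
  (1 - x) ^+ 2 * \sum_(k < N) k%:R * x ^+ k =
  x - N%:R * x ^+ N + (N%:R - 1) * x ^+ N.+1.
Proof.
elim: N => [|N IH]; first by rewrite big_ord0 !expr0 expr1; ring.
rewrite big_ord_recr /= mulrDr IH !exprS -natr1.
ring.
Qed.

Lemma wgeom_le (x : R) N : 0 <= x <= 1 ->
  (1 - x) ^+ 2 * \sum_(k < N) k%:R * x ^+ k <= x.
Proof.
case/andP => x0 x1; rewrite wgeom_eq exprS.
have xN : 0 <= x ^+ N by rewrite exprn_ge0.
case: N xN => [|N] xN; first by rewrite expr0 mul0r; lra.
have n0 : 0 <= N%:R :> R by rewrite ler0n.
have := mulr_ge0 (mulr_ge0 xN n0) (_ : 0 <= 1 - x); rewrite subr_ge0 => /(_ x1) h.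
rewrite -natr1; nra.
Qed.

Lemma bernoulli (y : R) c : 0 <= y <= 1 -> 1 - c%:R * y <= (1 - y) ^+ c.
Proof.
case/andP => y0 y1; elim: c => [|c IH]; first by rewrite mul0r subr0 expr0.
rewrite exprS -natr1.
have : 0 <= (1 - y) ^+ c by rewrite exprn_ge0 // subr_ge0.
have : 0 <= c%:R :> R by rewrite ler0n.
nra.
Qed.

Lemma sum_inj (T : eqType) (E : finType) (s : seq T) (Pr : pred T)
  (phi : T -> E) (f : T -> R) (G : E -> R) :
  uniq s -> {in [seq t <- s | Pr t] &, injective phi} ->
  (forall e, 0 <= G e) ->
  (forall t, t \in s -> Pr t -> f t <= G (phi t)) ->
  \sum_(t <- s | Pr t) f t <= \sum_e G e.
Proof.
move=> us inj G0 fG; rewrite -big_filter.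
apply: (@le_trans _ _ (\sum_(t <- [seq t <- s | Pr t]) G (phi t))).
  rewrite big_seq [X in _ <= X]big_seq; apply: ler_sum => t.
  by rewrite mem_filter => /andP[Pt ts]; apply: fG.
rewrite -(big_map phi xpredT G) big_uniq /=; last first.
  by rewrite map_inj_in_uniq // filter_uniq.
rewrite [X in _ <= X](bigID (fun e => e \in [seq phi i | i <- s & Pr i])) /=.
by rewrite lerDl sumr_ge0.
Qed.

Lemma tele_bound (t : nat -> R) (K : R) X : (0 < X)%N -> 0 <= K ->
  (forall d, 0 <= t d) -> t 0%N <= 1 -> t 1%N <= K ->
  (forall d, (2 <= d)%N -> t d <= d%:R / (d%:R - 1)) ->
  \prod_(d < X.+1) t d <= K * X%:R.
Proof.
move=> X0 K0 t0 h0 h1 hd.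
elim: X X0 => [//|X IH] _.
case: X IH => [|X] IH.
  rewrite big_ord_recr big_ord1 /= mulr1.
  by rewrite -[K]mul1r ler_pM.
rewrite big_ord_recr /=.
have IH' := IH isT.
have := hd X.+2 isT.
have P0 : 0 <= \prod_(d < X.+2) t d by apply: prodr_ge0.
set p := \prod_(d < X.+2) t d in IH' P0 *.
move=> h.
apply: (le_trans (ler_pM P0 (t0 _) IH' h)).
have -> : X.+2%:R / (X.+2%:R - 1) = X.+2%:R / X.+1%:R :> R.
  by congr (_ / _); rewrite mulrSr addrK.
rewrite -mulrA.
have -> : X.+1%:R * (X.+2%:R / X.+1%:R) = X.+2%:R :> R.
  by rewrite mulrCA mulfV ?mulr1 // pnatr_eq0.
done.
Qed.

End Real.

Section Euler.
Variable F : finFieldType.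
Variable R : realFieldType.
Implicit Types A P : {poly F}.

Definition PP X (i : 'I_(size (Ps F X))) := nth 0 (Ps F X) i.
Definition xx X (i : 'I_(size (Ps F X))) : R := (pnorm R (PP i))^-1.
Definition prodE X (e : 'I_(size (Ps F X)) -> nat) := \prod_i PP i ^+ e i.

Lemma PP_mirred X i : mirred (PP (X:=X) i).
Proof. by have := mem_nth 0 (ltn_ord i); rewrite mem_Ps => /andP[]. Qed.

Lemma PP_deg X i : (0 < pdeg (PP (X:=X) i) <= X)%N.
Proof.
have := mem_nth 0 (ltn_ord i); rewrite mem_Ps => /andP[mP ->].
have [_ _ s1] := mirredP mP; rewrite andbT /pdeg -subn1 subn_gt0 //.
Qed.

Lemma PP_monic X i : PP (X:=X) i \is monic.
Proof. by have [] := mirredP (PP_mirred i). Qed.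

Lemma qR_gt1 : 1 < (#|F|%:R : R).
Proof. by rewrite ltr1n q_gt1. Qed.

Lemma pnorm_ge1 A : 1 <= pnorm R A.
Proof. by rewrite /pnorm exprn_ege1 // ltW // qR_gt1. Qed.

Lemma pnorm_gt0 A : 0 < pnorm R A.
Proof. exact: lt_le_trans ltr01 (pnorm_ge1 A). Qed.

Lemma xx_bound X i : 0 <= xx (X:=X) i <= 2^-1.
Proof.
rewrite /xx invr_ge0 ltW ?pnorm_gt0 //=.
rewrite lef_pV2 ?posrE ?pnorm_gt0 //.
rewrite /pnorm; have /andP[d1 _] := PP_deg i.
apply: le_trans (_ : (#|F|%:R : R) <= _).
  by rewrite ler_nat q_gt1.
by rewrite -[Y in Y <= _]expr1 ler_eXn2l // qR_gt1.
Qed.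

Lemma prodE_monic X e : prodE (X:=X) e \is monic.
Proof. by apply: monic_prod => i _; apply/monic_exp/PP_monic. Qed.

Lemma pdeg_prodE X e :
  pdeg (prodE (X:=X) e) = (\sum_i e i * pdeg (PP i))%N.
Proof.
rewrite /prodE pdeg_prod => [|i _]; last by apply/monic_exp/PP_monic.
by apply: eq_bigr => i _; rewrite pdeg_exp // PP_monic.
Qed.

Lemma pnorm_prodE X e :
  pnorm R (prodE (X:=X) e) = \prod_i pnorm R (PP i) ^+ e i.
Proof.
rewrite /pnorm pdeg_prodE -prodrXr; apply: eq_bigr => i _.
by rewrite -exprM mulnC.
Qed.

Definition phi X D A : {ffun 'I_(size (Ps F X)) -> 'I_D.+1} :=
  odflt [ffun => ord0] [pick e : {ffun 'I_(size (Ps F X)) -> 'I_D.+1}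
                          | A == prodE (fun i => e i)].

Lemma phiP X D A : A \in monic_le F D -> smooth X A ->
  A = prodE (fun i => phi X D A i).
Proof.
rewrite mem_monic_le => /andP[Am sA] smA.
have [e He] := factor_ex (leqnn _) Am smA.
have eD i : (e i <= D)%N.
  have : (pdeg A <= D)%N by rewrite /pdeg; move: sA; case: (size A).
  rewrite He -/(prodE e) pdeg_prodE (bigD1 i) //=.
  have /andP[d1 _] := PP_deg i.
  move=> h; apply: leq_trans h; apply: leq_trans (leq_addr _ _).
  by rewrite leq_pmulr.
rewrite /phi; case: pickP => [e' /eqP He'|H]; first exact: He'.
have : A == prodE (fun i => ([ffun i => inord (e i)] : {ffun 'I_(size (Ps F X)) -> 'I_D.+1}) i).
  rewrite {1}He /prodE; apply/eqP/eq_bigr => i _.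
  by rewrite ffunE inordK // ltnS.
by rewrite H.
Qed.

End Euler.

Section Euler2.
Variable F : finFieldType.
Variable R : realFieldType.
Implicit Types A P : {poly F}.

Definition S0 X D : R := \sum_(A <- monic_le F D | smooth X A) (pnorm R A)^-1.
Definition S1 X D : R :=
  \sum_(A <- monic_le F D | smooth X A) (pdeg A)%:R / pnorm R A.
Definition Pi0 X : R := \prod_(i < size (Ps F X)) (1 - xx R i)^-1.

Lemma phi_inj X D : {in [seq A <- monic_le F D | smooth X A] &, injective (phi X D)}.
Proof.
move=> A B; rewrite !mem_filter => /andP[sA mA] /andP[sB mB] h.
by rewrite (phiP mA sA) (phiP mB sB) h.
Qed.

Lemma xx_lt1 X (i : 'I_(size (Ps F X))) : 0 <= xx R i < 1.
Proof.
have /andP[h1 h2] := xx_bound R i; rewrite h1 /=.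
apply: le_lt_trans h2 _; rewrite invf_lt1 ?ltr0n // ltr1n //.
Qed.

Lemma inv1x_ge1 X (i : 'I_(size (Ps F X))) : 1 <= (1 - xx R i)^-1.
Proof.
have /andP[h1 h2] := xx_lt1 i.
rewrite invf_ge1 ?subr_gt0 //; lra.
Qed.

Lemma Pi0_ge0 X : 0 <= Pi0 X.
Proof.
apply: prodr_ge0 => i _; exact: le_trans ler01 (inv1x_ge1 i).
Qed.

Lemma S0_le X D : S0 X D <= Pi0 X.
Proof.
apply: le_trans (sum_inj (phi:=phi X D) (G := fun e => \prod_i xx R i ^+ e i)
   (uniq_monic_le _ _) (@phi_inj X D) _ _) _.
- move=> e; apply: prodr_ge0 => i _; apply: exprn_ge0.
  by have /andP[] := xx_bound R i.
- move=> A mA sA; rewrite {1}(phiP mA sA) pnorm_prodE -prodfV.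
  by rewrite le_eqVlt; apply/orP; left; apply/eqP/eq_bigr => i _; rewrite /xx exprVn.
rewrite -(bigA_distr_bigA (fun i (k : 'I_D.+1) => xx R i ^+ k)) /=.
apply: ler_prod => i _; apply/andP; split.
  by apply: sumr_ge0 => k _; apply: exprn_ge0; have /andP[] := xx_bound R i.
exact: geom_le (xx_lt1 i).
Qed.

Lemma aux_a (x a : R) : 0 <= x <= 2^-1 -> 0 <= a -> (1 - x) ^+ 2 * a <= x ->
  a <= 2 * x * (1 - x)^-1.
Proof.
case/andP => x0 x1 a0 h.
have h2 : (2^-1 : R) < 1 by rewrite invf_lt1 ?ltr0n ?ltr1n.
have p : 0 < 1 - x by lra.
rewrite ler_pdivlMr //.
have x1' : x * 2 <= 1 by rewrite -ler_pdivlMr ?ltr0n // mul1r.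
nra.
Qed.

Lemma S1_le X D : S1 X D <= 2 * Pi0 X * \sum_(i < size (Ps F X)) (pdeg (PP i))%:R * xx R i.
Proof.
pose w (i j : 'I_(size (Ps F X))) (k : nat) : R :=
  (if j == i then k%:R else 1) * xx R j ^+ k.
have xge0 (j : 'I_(size (Ps F X))) : 0 <= xx R j by have /andP[] := xx_bound R j.
apply: le_trans (sum_inj (phi:=phi X D)
   (G := fun e => \sum_i (pdeg (PP i))%:R * \prod_j w i j (e j))
   (uniq_monic_le _ _) (@phi_inj X D) _ _) _.
- move=> e; apply: sumr_ge0 => i _; apply: mulr_ge0; first exact: ler0n.
  apply: prodr_ge0 => j _; apply: mulr_ge0; last exact: exprn_ge0.
  by case: ifP => _; rewrite ?ler0n ?ler01.
- move=> A mA sA; set e := phi X D A.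
  rewrite {1 2}(phiP mA sA) pnorm_prodE pdeg_prodE -prodfV natr_sum mulr_suml.
  rewrite le_eqVlt; apply/orP; left; apply/eqP/eq_bigr => i _.
  have hI : \prod_j (if j == i then (e j)%:R else 1) = (e i)%:R :> R.
    by rewrite (bigD1 i) //= eqxx big1 ?mulr1 // => j /negbTE ->.
  rewrite /w big_split /= hI.
  have -> : \prod_j xx R j ^+ e j = \prod_j pnorm R (PP j) ^- e j.
    by apply: eq_bigr => j _; rewrite /xx exprVn.
  rewrite natrM; ring.
rewrite exchange_big /=.
under eq_bigr => i _ do rewrite -big_distrr /=.
rewrite big_distrr /=; apply: ler_sum => i _.
have -> : 2 * Pi0 X * ((pdeg (PP i))%:R * xx R i) =
          (pdeg (PP i))%:R * (2 * xx R i * Pi0 X) by ring.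
apply: ler_wpM2l; first exact: ler0n.
rewrite -(bigA_distr_bigA (fun j (k : 'I_D.+1) => w i j k)) /=.
rewrite (bigD1 i) //= /Pi0 [X in _ <= _ * _ * X](bigD1 i) //= mulrA.
apply: ler_pM.
- apply: sumr_ge0 => k _; rewrite /w eqxx.
  by apply: mulr_ge0; [exact: ler0n | exact: exprn_ge0].
- apply: prodr_ge0 => j _; apply: sumr_ge0 => k _.
  by apply: mulr_ge0; [case: ifP; rewrite ?ler0n ?ler01 | exact: exprn_ge0].
- under eq_bigr => k _ do rewrite /w eqxx.
  apply: aux_a.
  + exact: xx_bound.
  + by apply: sumr_ge0 => k _; apply: mulr_ge0; [exact: ler0n | exact: exprn_ge0].
  + apply: wgeom_le; have /andP[h1 h2] := xx_lt1 i; rewrite h1 ltW //.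
- apply: ler_prod => j ji; rewrite /w (negbTE ji).
  under eq_bigr => k _ do rewrite mul1r.
  apply/andP; split; last exact: geom_le (xx_lt1 j).
  by apply: sumr_ge0 => k _; apply: exprn_ge0.
Qed.

End Euler2.

Section Group.
Variable F : finFieldType.
Variable R : realFieldType.
Implicit Types A P : {poly F}.

Lemma group_prod_seq (g : nat -> R) (s : seq {poly F}) X :
  all (fun P => pdeg P <= X)%N s ->
  \prod_(P <- s) g (pdeg P) =
  \prod_(d < X.+1) g d ^+ count (fun P => pdeg P == d) s.
Proof.
elim: s => [|P s IH] /=; first by rewrite big_nil big1 // => d _; rewrite expr0.
case/andP => PX sX; rewrite big_cons IH //.
under [RHS]eq_bigr => d _ do rewrite exprD.
rewrite big_split /=; congr (_ * _).
have PX' : (pdeg P < X.+1)%N by rewrite ltnS.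
rewrite (bigD1 (Ordinal PX')) //= eqxx expr1 big1 ?mulr1 // => d.
by rewrite -val_eqE /= eq_sym => /negbTE ->.
Qed.

Lemma group_sum_seq (g : nat -> R) (s : seq {poly F}) X :
  all (fun P => pdeg P <= X)%N s ->
  \sum_(P <- s) g (pdeg P) =
  \sum_(d < X.+1) g d *+ count (fun P => pdeg P == d) s.
Proof.
elim: s => [|P s IH] /=; first by rewrite big_nil big1 // => d _; rewrite mulr0n.
case/andP => PX sX; rewrite big_cons IH //.
under [RHS]eq_bigr => d _ do rewrite mulrnDr.
rewrite big_split /=; congr (_ + _).
have PX' : (pdeg P < X.+1)%N by rewrite ltnS.
rewrite (bigD1 (Ordinal PX')) //= eqxx mulr1n big1 ?addr0 // => d.
by rewrite -val_eqE /= eq_sym => /negbTE ->.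
Qed.

Lemma all_Ps X : all (fun P => pdeg P <= X)%N (Ps F X).
Proof. by apply/allP => P; rewrite mem_Ps => /andP[]. Qed.

Lemma to_seq_prod (g : {poly F} -> R) X :
  \prod_(i < size (Ps F X)) g (PP i) = \prod_(P <- Ps F X) g P.
Proof. by rewrite (big_nth 0) big_mkord. Qed.

Lemma to_seq_sum (g : {poly F} -> R) X :
  \sum_(i < size (Ps F X)) g (PP i) = \sum_(P <- Ps F X) g P.
Proof. by rewrite (big_nth 0) big_mkord. Qed.

Lemma count0 X : count (fun P => pdeg P == 0%N) (Ps F X) = 0%N.
Proof.
apply/eqP; rewrite -leqn0 leqNgt -has_count; apply/hasPn => P.
rewrite mem_Ps => /andP[mP _]; have [_ _ s1] := mirredP mP.
by rewrite /pdeg -lt0n -subn1 subn_gt0.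
Qed.

Local Notation qR := (#|F|%:R : R).

Lemma qpos d : 0 < qR ^+ d.
Proof. by rewrite exprn_gt0 // ltr0n (ltn_trans _ (q_gt1 F)). Qed.

Lemma bound_d (y : R) c d : 0 <= y <= 1 -> (2 <= d)%N ->
  c%:R * y * d%:R <= 1 -> ((1 - y)^-1) ^+ c <= d%:R / (d%:R - 1).
Proof.
case/andP => y0 y1 d2 h.
have dR : 2 <= d%:R :> R by rewrite ler_nat.
have d0 : d%:R != 0 :> R by rewrite pnatr_eq0 -lt0n (ltn_trans _ d2).
have cy : c%:R * y <= d%:R^-1.
  by rewrite -[d%:R^-1]mul1r ler_pdivlMr //; lra.
have uh : d%:R^-1 <= 2^-1 :> R.
  by rewrite lef_pV2 ?posrE //; lra.
have h2 : (2^-1 : R) < 1 by rewrite invf_lt1 ?ltr0n ?ltr1n.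
have b := bernoulli c (_ : 0 <= y <= 1); rewrite y0 y1 in b; have {}b := b isT.
have e : d%:R / (d%:R - 1) = (1 - d%:R^-1)^-1 :> R.
  field; apply/andP; split => //; apply/eqP; lra.
rewrite e exprVn lef_pV2 ?posrE; first by lra.
- lra.
- lra.
Qed.


Lemma yy_bound d : 0 <= (qR ^+ d)^-1 <= 1.
Proof.
rewrite invr_ge0 ltW ?qpos //= invf_le1 ?qpos //.
by rewrite exprn_ege1 // ler1n ltnW // q_gt1.
Qed.

Lemma cd_bound X d : (0 < d)%N ->
  (count (fun P => pdeg P == d) (Ps F X))%:R * (qR ^+ d)^-1 * d%:R <= 1 :> R.
Proof.
move=> d0; have h := count_deg F X d0.
rewrite mulrAC -natrM mulnC -ler_pdivlMr ?mul1r; last by rewrite invr_gt0 qpos.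
by rewrite invrK -natrX ler_nat.
Qed.

Lemma Pi0_le X : (0 < X)%N -> Pi0 F R X <= 2 ^+ #|F| * X%:R.
Proof.
move=> X0; rewrite /Pi0 /xx /pnorm.
rewrite (to_seq_prod (fun P => (1 - (qR ^+ pdeg P)^-1)^-1)).
rewrite (group_prod_seq (fun d => (1 - (qR ^+ d)^-1)^-1) (all_Ps X)).
apply: (tele_bound (t := fun d => ((1 - (qR ^+ d)^-1)^-1) ^+ count (fun P => pdeg P == d) (Ps F X))) => //.
- by rewrite exprn_ge0.
- move=> d; apply: exprn_ge0; rewrite invr_ge0 subr_ge0.
  by have /andP[] := yy_bound d.
- by rewrite count0 expr0.
- have c1 := count_deg F X (isT : (0 < 1)%N); rewrite mul1n expn1 in c1.
  set c := count _ _ in c1 *.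
  apply: (@le_trans _ _ (2 ^+ c)).
    apply: lerXn2r; rewrite ?nnegrE.
    + by rewrite invr_ge0 subr_ge0; have /andP[] := yy_bound 1.
    + by [].
    have q2 : 2 <= qR by rewrite ler_nat q_gt1.
    have hq : qR^-1 <= 2^-1 by rewrite lef_pV2 ?posrE //; lra.
    have h2 : (2^-1 : R) < 1 by rewrite invf_lt1 ?ltr0n ?ltr1n.
    have h0 : 0 <= qR^-1 by rewrite invr_ge0; lra.
    rewrite expr1 -[X in _ <= X]invrK lef_pV2 ?posrE; lra.
  by rewrite ler_eXn2l ?ltr1n.
- move=> d d2; apply: bound_d => //; first exact: yy_bound.
  by apply: cd_bound; apply: ltn_trans d2.
Qed.

Lemma sumdx_le X :
  \sum_(i < size (Ps F X)) (pdeg (PP i))%:R * xx R i <= X%:R.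
Proof.
rewrite /xx /pnorm.
rewrite (to_seq_sum (fun P => (pdeg P)%:R * (qR ^+ pdeg P)^-1)).
rewrite (group_sum_seq (fun d => d%:R * (qR ^+ d)^-1) (all_Ps X)).
rewrite big_ord_recl /= mul0r mul0rn add0r.
apply: (@le_trans _ _ (\sum_(i < X) (1 : R))); last first.
  by rewrite sumr_const card_ord.
apply: ler_sum => i _.
rewrite /bump /= add1n -mulr_natl.
apply: le_trans (cd_bound X (ltn0Sn i)); rewrite le_eqVlt; apply/orP; left.
apply/eqP; ring.
Qed.

End Group.


Section Main.
Variable F : finFieldType.
Variable R : realFieldType.
Implicit Types A B P : {poly F}.

Lemma smooth_dvd X A B : A != 0 -> B != 0 -> B %| A -> smooth X A -> smooth X B.
Proof.
move=> A0 B0 BA /smoothP => /(_ A0) h; apply/smoothP => // P mP PB.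
by apply: h => //; apply: dvdp_trans BA.
Qed.

Lemma pnormM A B : A \is monic -> B \is monic ->
  pnorm R (A * B) = pnorm R A * pnorm R B.
Proof. by move=> Am Bm; rewrite /pnorm pdeg_monicM // exprD. Qed.

Definition aa X A : R := if smooth X A then (pnorm R A)^-1 else 0.
Definition bb X A : R := if smooth X A then (pdeg A)%:R / pnorm R A else 0.

Lemma aa_ge0 X A : 0 <= aa X A.
Proof. by rewrite /aa; case: ifP => // _; rewrite invr_ge0 ltW // pnorm_gt0. Qed.

Lemma bb_ge0 X A : 0 <= bb X A.
Proof.
rewrite /bb; case: ifP => // _; apply: mulr_ge0; first exact: ler0n.
by rewrite invr_ge0 ltW // pnorm_gt0.
Qed.

Lemma pointwise X D Rp H S T :
  H \in monic_le F D -> S \in monic_le F D -> T \in monic_le F D ->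
  (if [&& smooth X (H * S * T), coprimep S T, coprimep (H * S * T) Rp,
          (10 * pdeg (H * S) <= D)%N & (10 * pdeg (H * T) <= D)%N]
   then `|alpha R X (H * S) * alpha R X (H * T) / pnorm R (H * S * T)
           * (pdeg (S * T))%:R|
   else 0)
  <= aa X H * (bb X S * aa X T + aa X S * bb X T).
Proof.
rewrite !mem_monic_le => /andP[Hm _] /andP[Sm _] /andP[Tm _].
have HSTm : H * S * T \is monic by rewrite !monicMl.
have rhs0 : 0 <= aa X H * (bb X S * aa X T + aa X S * bb X T).
  by rewrite mulr_ge0 ?addr_ge0 ?mulr_ge0 ?aa_ge0 ?bb_ge0.
case: ifP => // /and5P[sm _ _ _ _].
have smH : smooth X H.
  by apply: smooth_dvd sm; rewrite ?monic_neq0 // -mulrA dvdp_mulr.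
have smS : smooth X S.
  by apply: smooth_dvd sm; rewrite ?monic_neq0 // mulrAC dvdp_mulIr.
have smT : smooth X T.
  by apply: smooth_dvd sm; rewrite ?monic_neq0 // dvdp_mulIr.
rewrite /aa /bb smH smS smT.
have pH := pnorm_gt0 R H; have pS := pnorm_gt0 R S; have pT := pnorm_gt0 R T.
have -> : (pnorm R H)^-1 * ((pdeg S)%:R / pnorm R S * (pnorm R T)^-1 +
           (pnorm R S)^-1 * ((pdeg T)%:R / pnorm R T)) =
          (pnorm R (H * S * T))^-1 * (pdeg (S * T))%:R.
  rewrite !pnormM ?monicMl // pdeg_monicM // natrD.
  field; rewrite !gt_eqF //.
rewrite !normrM normfV (ger0_norm (ler0n _ _)) (ger0_norm (ltW (pnorm_gt0 _ _))).
rewrite -mulrA; apply: ler_piMl.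
  by rewrite mulr_ge0 ?ler0n // invr_ge0 ltW // pnorm_gt0.
by apply: mulr_ile1; rewrite ?normr_ge0 ?alpha_le1.
Qed.

Lemma ler_sum_in (I : eqType) (r : seq I) (G1 G2 : I -> R) :
  (forall i, i \in r -> G1 i <= G2 i) ->
  \sum_(i <- r) G1 i <= \sum_(i <- r) G2 i.
Proof. by move=> h; rewrite big_seq [Y in _ <= Y]big_seq; apply: ler_sum. Qed.

Lemma main_red X (Rp : {poly F}) :
  `|lemma_sum R X Rp| <=
  S0 F R X (pdeg Rp) * (S1 F R X (pdeg Rp) * S0 F R X (pdeg Rp)
                        + S0 F R X (pdeg Rp) * S1 F R X (pdeg Rp)).
Proof.
rewrite /lemma_sum /= /S0 /S1 !(big_mkcond (smooth X)) /=.
set ML := monic_le F (pdeg Rp).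
set SA := \sum_(A <- ML) (if smooth X A then (pnorm R A)^-1 else 0).
set SB := \sum_(A <- ML) (if smooth X A then (pdeg A)%:R / pnorm R A else 0).
have eA : SA = \sum_(A <- ML) aa X A by [].
have eB : SB = \sum_(A <- ML) bb X A by [].
have -> : SA * (SB * SA + SA * SB) = \sum_(H <- ML) \sum_(S <- ML) \sum_(T <- ML)
     aa X H * (bb X S * aa X T + aa X S * bb X T).
  have Z : \sum_(S <- ML) \sum_(T <- ML) (bb X S * aa X T + aa X S * bb X T)
           = SB * SA + SA * SB.
    under eq_bigr => S _ do rewrite big_split /= -!big_distrr /= -eA -eB.
    by rewrite big_split /= -!big_distrl /= -eA -eB.
  rewrite -Z eA mulr_suml; apply: eq_bigr => H _.
  rewrite big_distrr; apply: eq_bigr => S _; by rewrite big_distrr.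
apply: le_trans (ler_norm_sum _ _ _) _; apply: ler_sum_in => H HM.
apply: le_trans (ler_norm_sum _ _ _) _; apply: ler_sum_in => S SM.
apply: le_trans (ler_norm_sum _ _ _) _; rewrite big_mkcond /=.
apply: ler_sum_in => T TM.
exact: pointwise.
Qed.

End Main.

Unset Implicit Arguments.

Theorem lemma6p2 (F : finFieldType) (R : realFieldType) :
  exists C : R, exists X0 : nat, forall X : nat, (X0 <= X)%N ->
    forall Rp : {poly F}, Rp \is monic ->
      `| lemma_sum R X Rp | <= C * (X%:R) ^+ 4.
Proof.
exists (4 * (2 ^+ #|F|) ^+ 3), 1%N => X X1 Rp _.
apply: le_trans (main_red R X Rp) _.
set s0 := S0 F R X (pdeg Rp); set s1 := S1 F R X (pdeg Rp).
set K : R := 2 ^+ #|F|.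
have K0 : 0 <= K by rewrite exprn_ge0.
have X0 : 0 <= X%:R :> R by rewrite ler0n.
have hP : Pi0 F R X <= K * X%:R := Pi0_le F R X1.
have hP0 : 0 <= Pi0 F R X := Pi0_ge0 F R X.
have s0ge : 0 <= s0.
  by apply: sumr_ge0 => A _; rewrite invr_ge0 ltW // pnorm_gt0.
have s1ge : 0 <= s1.
  apply: sumr_ge0 => A _; apply: mulr_ge0; first exact: ler0n.
  by rewrite invr_ge0 ltW // pnorm_gt0.
have h0 : s0 <= K * X%:R := le_trans (S0_le F R X (pdeg Rp)) hP.
have hs : \sum_(i < size (Ps F X)) (pdeg (PP i))%:R * xx R i <= X%:R := sumdx_le F R X.
have hs0 : 0 <= \sum_(i < size (Ps F X)) (pdeg (PP i))%:R * xx R i.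
  apply: sumr_ge0 => i _; apply: mulr_ge0; first exact: ler0n.
  by have /andP[] := xx_bound R i.
have h1 : s1 <= 2 * (K * X%:R) * X%:R.
  apply: le_trans (S1_le F R X (pdeg Rp)) _.
  apply: ler_pM => //; first by rewrite mulr_ge0.
  by rewrite ler_wpM2l.
have e : s0 * (s1 * s0 + s0 * s1) = 2 * (s0 * s0 * s1) by ring.
rewrite e.
have hss : s0 * s0 <= (K * X%:R) * (K * X%:R) by apply: ler_pM.
have hsss : s0 * s0 * s1 <= (K * X%:R) * (K * X%:R) * (2 * (K * X%:R) * X%:R).
  by apply: ler_pM => //; rewrite mulr_ge0.
apply: le_trans (ler_wpM2l _ hsss) _; first by [].
rewrite le_eqVlt; apply/orP; left; apply/eqP; rewrite /K; ring.
Qed.
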